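(* Let $B\in\mathbb R^{n\times n}$ be symmetric positive semidefinite, let $T\ge1$ be an integer and $\alpha>0$ with $\alpha<1/\rho(B)$ (so that $I-\alpha B$ is positive definite). Define $C=\sum_{t=0}^{T-1}(I-\alpha B)^t$. Then $C$ is invertible and symmetric; and with $M=C^{-1}(I-\alpha B)^T$ and $N=\frac{1}{\alpha}(C^{-1}-M)$, the matrix $N$ is symmetric positive semidefinite and $M$ is symmetric positive definite with \[\frac{(1-\alpha\rho(B))^T}{\sum_{t=0}^{T-1}(1-\alpha\rho(B))^t}I\preceq M\preceq\frac{1}{T}I.\]
   Context: $\rho(B)$ denotes the largest eigenvalue of $B$ (if $B=0$, $1/\rho(B)=\infty$). For symmetric matrices, $S_1\preceq S_2$ means $S_2-S_1$ is positive semidefinite. *)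

(* Defs.v *)
From mathcomp Require Import all_boot all_order all_algebra.
Set Implicit Arguments. Unset Strict Implicit. Unset Printing Implicit Defensive.
Import Order.TTheory GRing.Theory Num.Theory.
Local Open Scope ring_scope.

Definition symmetric_mx (R : pzRingType) (n : nat) (A : 'M[R]_n) : Prop := A^T = A.

Definition psd_mx (R : numDomainType) (n : nat) (A : 'M[R]_n) : Prop :=
  symmetric_mx A /\ forall v : 'cV[R]_n, 0 <= (v^T *m A *m v) 0 0.

Definition pd_mx (R : numDomainType) (n : nat) (A : 'M[R]_n) : Prop :=
  symmetric_mx A /\ forall v : 'cV[R]_n, v != 0 -> 0 < (v^T *m A *m v) 0 0.

Definition loewner_le (R : numDomainType) (n : nat) (S1 S2 : 'M[R]_n) : Prop :=
  psd_mx (S2 - S1).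

(* Main.v *)
Require Import Defs.
From mathcomp Require Import all_boot all_order all_algebra.
From mathcomp Require Import complex.
Import Order.TTheory GRing.Theory Num.Theory.
Set Implicit Arguments. Unset Strict Implicit. Unset Printing Implicit Defensive.
Local Open Scope ring_scope.
Local Open Scope sesquilinear_scope.

Definition Sp (C : numClosedFieldType) n (U : 'M[C]_n) (h : 'I_n -> C) : 'M[C]_n :=
  U ^t* *m diag_mx (\row_i h i) *m U.

Lemma unitK (C : numClosedFieldType) n (U : 'M[C]_n) : U \is unitarymx -> U ^t* *m U = 1%:M.
Proof. by move=> Uu; rewrite -invmx_unitary // mulVmx // unitarymx_unit. Qed.

Lemma eqSp (C : numClosedFieldType) n (U : 'M[C]_n) (f g : 'I_n -> C) :
  (forall i, f i = g i) -> Sp U f = Sp U g.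
Proof. by move=> fg; rewrite /Sp; congr (_ *m diag_mx _ *m _); apply/rowP => j; rewrite !mxE fg. Qed.

Lemma SpM (C : numClosedFieldType) n (U : 'M[C]_n) f g : U \is unitarymx ->
  Sp U f *m Sp U g = Sp U (fun i => f i * g i).
Proof.
move=> Uu; rewrite /Sp !mulmxA mulmxtVK // -(mulmxA _ (diag_mx _) (diag_mx _)) mulmx_diag.
by congr (_ *m diag_mx _ *m _); apply/rowP => j; rewrite !mxE.
Qed.

Lemma SpD (C : numClosedFieldType) n (U : 'M[C]_n) f g :
  Sp U f + Sp U g = Sp U (fun i => f i + g i).
Proof.
rewrite /Sp -mulmxDl -mulmxDr; congr (_ *m _ *m _).
by apply/matrixP => i j; rewrite !mxE -mulrnDl.
Qed.

Lemma SpN (C : numClosedFieldType) n (U : 'M[C]_n) f :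
  - Sp U f = Sp U (fun i => - f i).
Proof.
rewrite /Sp -mulNmx -mulmxN; congr (_ *m _ *m _).
by apply/matrixP => i j; rewrite !mxE -mulNrn.
Qed.

Lemma SpB (C : numClosedFieldType) n (U : 'M[C]_n) f g :
  Sp U f - Sp U g = Sp U (fun i => f i - g i).
Proof. by rewrite SpN SpD. Qed.

Lemma SpZ (C : numClosedFieldType) n (U : 'M[C]_n) a f :
  a *: Sp U f = Sp U (fun i => a * f i).
Proof.
rewrite /Sp scalemxAl scalemxAr; congr (_ *m _ *m _).
by apply/matrixP => i j; rewrite !mxE mulrnAr.
Qed.

Lemma SpC (C : numClosedFieldType) n (U : 'M[C]_n) a : U \is unitarymx ->
  Sp U (fun=> a) = a%:M.
Proof.
move=> Uu; rewrite /Sp.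
have -> : \row_i a = const_mx a :> 'rV_n by apply/rowP => j; rewrite !mxE.
by rewrite diag_const_mx mul_mx_scalar -scalemxAl unitK // scalemx1.
Qed.

Lemma Sp0 (C : numClosedFieldType) n (U : 'M[C]_n) : Sp U (fun=> 0) = 0.
Proof.
rewrite /Sp; have -> : \row_i (0 : C) = 0 :> 'rV_n by apply/rowP => j; rewrite !mxE.
by rewrite linear0 mulmx0 mul0mx.
Qed.

Lemma Sp_sum (C : numClosedFieldType) n (U : 'M[C]_n) T (f : nat -> 'I_n -> C) :
  \sum_(t < T) Sp U (f t) = Sp U (fun i => \sum_(t < T) f t i).
Proof.
elim: T => [|T IH].
  by rewrite big_ord0 -(Sp0 U); apply: eqSp => i; rewrite big_ord0.
by rewrite big_ord_recr /= IH SpD; apply: eqSp => i; rewrite big_ord_recr.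
Qed.

Lemma SpX (C : numClosedFieldType) n (U : 'M[C]_n) f k : U \is unitarymx ->
  Sp U f ^+ k = Sp U (fun i => f i ^+ k).
Proof.
move=> Uu; elim: k => [|k IH].
  by rewrite expr0 (eqSp _ (fun i => expr0 (f i))) SpC.
by rewrite exprS IH -mulmxE SpM //; apply: eqSp => i; rewrite exprS.
Qed.

Lemma Sp_quad (C : numClosedFieldType) n (U : 'M[C]_n) h (w : 'cV[C]_n) :
  (w ^t* *m Sp U h *m w) 0 0 = \sum_j h j * `|(U *m w) j 0| ^+ 2.
Proof.
have -> : w ^t* *m Sp U h *m w = (U *m w) ^t* *m diag_mx (\row_i h i) *m (U *m w).
  by rewrite /Sp trmx_mul map_mxM !mulmxA.
rewrite mul_mx_diag !mxE; apply: eq_bigr => j _; rewrite !mxE normCK.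
by rewrite -mulrA mulrCA [_^* * _]mulrC.
Qed.

Lemma Sp_quad_ge0 (C : numClosedFieldType) n (U : 'M[C]_n) h (w : 'cV[C]_n) :
  (forall i, 0 <= h i) -> 0 <= (w ^t* *m Sp U h *m w) 0 0.
Proof.
move=> h0; rewrite Sp_quad; apply: sumr_ge0 => j _.
by rewrite mulr_ge0 // exprn_ge0.
Qed.

Lemma Sp_quad_gt0 (C : numClosedFieldType) n (U : 'M[C]_n) h (w : 'cV[C]_n) :
  U \is unitarymx -> (forall i, 0 < h i) -> w != 0 -> 0 < (w ^t* *m Sp U h *m w) 0 0.
Proof.
move=> Uu h0 w0; rewrite Sp_quad.
have [j Hj] : exists j, (U *m w) j 0 != 0.
  case: (pickP (fun j => (U *m w) j 0 != 0)) => [j Hj|H]; first by exists j.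
  have Uw0 : U *m w = 0.
    by apply/matrixP => i k; rewrite ord1 [RHS]mxE; apply/eqP; move: (H i) => /= /negbFE.
  by move: w0; rewrite -[w]mul1mx -(unitK Uu) -mulmxA Uw0 mulmx0 eqxx.
rewrite (bigD1 j) //=; apply: (@lt_le_trans _ _ (h j * `|(U *m w) j 0| ^+ 2)).
  by rewrite mulr_gt0 // exprn_gt0 // normr_gt0.
rewrite lerDl; apply: sumr_ge0 => k _.
by rewrite mulr_ge0 ?exprn_ge0 // ltW.
Qed.

Lemma Sp_herm (C : numClosedFieldType) n (U : 'M[C]_n) h :
  (forall i, h i \is Num.real) -> Sp U h ^t* = Sp U h.
Proof.
move=> hr; rewrite /Sp !trmx_mul !map_mxM trmxCK tr_diag_mx map_diag_mx mulmxA.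
congr (_ *m diag_mx _ *m _); apply/rowP => j; rewrite !mxE; exact: (conj_Creal (hr j)).
Qed.

Lemma Sp_inv (C : numClosedFieldType) n (U : 'M[C]_n) f g : U \is unitarymx ->
  (forall i, f i * g i = 1) -> Sp U f \in unitmx /\ invmx (Sp U f) = Sp U g.
Proof.
move=> Uu fg; have E : Sp U f *m Sp U g = 1%:M.
  by rewrite SpM // (eqSp _ fg) SpC.
have Hu : Sp U f \in unitmx by case: (mulmx1_unit E).
split => //; by rewrite -[invmx _]mulmx1 -E mulmxA mulVmx // mul1mx.
Qed.

Definition phiC (R : rcfType) : {rmorphism R -> (R[i] : numClosedFieldType)} := real_complex R.
Lemma phiCE (R : rcfType) (x : R) : phiC R x = real_complex R x. Proof. by []. Qed.

Lemma phi_real (R : rcfType) (x : R) : phiC R x \is Num.real.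
Proof. by rewrite phiCE; apply/complex_realP; exists x. Qed.

Lemma map_conj_real (R : rcfType) m p (A : 'M[R]_(m, p)) :
  map_mx Num.conj (map_mx (phiC R) A) = map_mx (phiC R) A.
Proof. by apply/matrixP => i j; rewrite !mxE; exact: (conj_Creal (phi_real _)). Qed.

Lemma quad_map (R : rcfType) n (X : 'M[R]_n) (v : 'cV[R]_n) :
  phiC R ((v^T *m X *m v) 0 0) =
  ((map_mx (phiC R) v) ^t* *m map_mx (phiC R) X *m map_mx (phiC R) v) 0 0.
Proof.
by rewrite -map_trmx map_conj_real map_trmx -!map_mxM [RHS]mxE.
Qed.

Lemma sym_of_Sp (R : rcfType) n (X : 'M[R]_n) (U : 'M[R[i]]_n) (h : 'I_n -> R) :
  map_mx (phiC R) X = Sp U (fun i => phiC R (h i)) -> symmetric_mx X.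
Proof.
move=> E; rewrite /symmetric_mx; apply: (@map_mx_inj _ _ (phiC R)).
rewrite -map_trmx -[in LHS]map_conj_real map_trmx E Sp_herm // => i.
exact: phi_real.
Qed.

Lemma psd_of_Sp (R : rcfType) n (X : 'M[R]_n) (U : 'M[R[i]]_n) (h : 'I_n -> R) :
  map_mx (phiC R) X = Sp U (fun i => phiC R (h i)) ->
  (forall i, 0 <= h i) -> psd_mx X.
Proof.
move=> E h0; split; first exact: sym_of_Sp E.
move=> v; rewrite -ler0c -phiCE quad_map E; apply: Sp_quad_ge0 => i.
by rewrite phiCE ler0c.
Qed.

Lemma pd_of_Sp (R : rcfType) n (X : 'M[R]_n) (U : 'M[R[i]]_n) (h : 'I_n -> R) :
  U \is unitarymx ->
  map_mx (phiC R) X = Sp U (fun i => phiC R (h i)) ->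
  (forall i, 0 < h i) -> pd_mx X.
Proof.
move=> Uu E h0; split; first exact: sym_of_Sp E.
move=> v v0; rewrite -(ltcR 0) -!phiCE quad_map E rmorph0; apply: Sp_quad_gt0 => //.
  by move=> i; have := h0 i; rewrite -(ltcR 0) -!phiCE rmorph0.
apply: contra v0 => /eqP mv0; apply/eqP; apply: (@map_mx_inj _ _ (phiC R)).
by rewrite mv0 map_mx0.
Qed.

Lemma spec_setup (R : rcfType) n (B : 'M[R]_n) : symmetric_mx B ->
  exists U : 'M[R[i]]_n, exists d : 'I_n -> R,
   [/\ U \is unitarymx, map_mx (phiC R) B = Sp U (fun i => phiC R (d i))
     & forall i, eigenvalue B (d i)].
Proof.
move=> Bs.
set BC := map_mx (phiC R) B.
have Bh : BC \is hermsymmx.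
  apply/is_hermitianmxP; rewrite expr0 scale1r; apply/matrixP => i j; rewrite !mxE.
  rewrite (conj_Creal (phi_real _)).
  by have := congr1 (fun M : 'M[R]_n => M i j) (Bs : B^T = B); rewrite mxE => ->.
have /orthomx_spectralP E := hermitian_normalmx Bh.
have Hr := hermitian_spectral_diag_real Bh.
set U := spectralmx BC in E; set d0 := spectral_diag BC in E Hr.
have Uu : U \is unitarymx := spectral_unitarymx BC.
have Ed : forall i, phiC R (complex.Re (d0 0 i)) = d0 0 i.
  by move=> i; rewrite phiCE; apply: RRe_real; exact: (mxOverP Hr 0 i).
exists U, (fun i => complex.Re (d0 0 i)); split => //.
  have Ed' : d0 = \row_j phiC R (complex.Re (d0 0 j)).
    by apply/rowP => j; rewrite mxE Ed.
  by rewrite /Sp {1}E invmx_unitary // {1}Ed'.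
move=> i.
have eC : eigenvalue BC (d0 0 i).
  apply/eigenvalueP; exists ('e_i *m U).
    by rewrite {1}E invmx_unitary // !mulmxA mulmxtVK // -(rowE i (diag_mx d0)) row_diag_mx -scalemxAl.
  apply/negP => /eqP H.
  have := congr1 (mulmx^~ (U ^t*)) H; rewrite /= mul0mx.
  rewrite mulmxtVK // => /matrixP /(_ 0 i); rewrite !mxE !eqxx /= => /eqP.
  by rewrite oner_eq0.
by move: eC; rewrite eigenvalue_root_char -map_char_poly -Ed fmorph_root -eigenvalue_root_char.
Qed.

Lemma eig_psd_ge0 (R : realFieldType) n (B : 'M[R]_n) a :
  psd_mx B -> eigenvalue B a -> 0 <= a.
Proof.
move=> [_ Hp] /eigenvalueP [v Hv v0].
have := Hp v^T; rewrite trmxK Hv -scalemxAl mxE.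
have [j Hj] : exists j, v 0 j != 0.
  case: (pickP (fun j => v 0 j != 0)) => [j Hj|H]; first by exists j.
  move: v0; have -> : v = 0; last by rewrite eqxx.
  by apply/rowP => k; rewrite [RHS]mxE; apply/eqP; move: (H k) => /= /negbFE.
have s_gt0 : 0 < (v *m v^T) 0 0.
  rewrite mxE (bigD1 j) //=; apply: (@lt_le_trans _ _ (v 0 j * v^T j 0)).
    by rewrite mxE -expr2 lt_def sqrf_eq0 Hj sqr_ge0.
  rewrite lerDl; apply: sumr_ge0 => k _; by rewrite mxE -expr2 sqr_ge0.
by rewrite pmulr_lge0.
Qed.

Lemma geo_pos (R : realFieldType) (x : R) T : 0 <= x -> (0 < T)%N -> 0 < \sum_(t < T) x ^+ t.
Proof.
case: T => // T x0 _; rewrite big_ord_recl expr0; apply: (lt_le_trans ltr01).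
by rewrite lerDl; apply: sumr_ge0 => t _; exact: exprn_ge0.
Qed.

Lemma lower_b (R : realFieldType) (a0 a : R) T : 0 < a0 -> a0 <= a -> (0 < T)%N ->
  a0 ^+ T / \sum_(t < T) a0 ^+ t <= a ^+ T / \sum_(t < T) a ^+ t.
Proof.
move=> p0 le T0; have ap : 0 < a := lt_le_trans p0 le.
have S0p := geo_pos (ltW p0) T0; have Sp := geo_pos (ltW ap) T0.
rewrite ler_pdivlMr // mulrAC ler_pdivrMr //.
rewrite !mulr_sumr; apply: ler_sum => t _.
have tT : (t <= T)%N := ltnW (ltn_ord t).
have -> : a0 ^+ T = a0 ^+ (T - t) * a0 ^+ t by rewrite -exprD subnK.
have -> : a ^+ T = a ^+ (T - t) * a ^+ t by rewrite -exprD subnK.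
rewrite -!mulrA [a ^+ t * _]mulrC; apply: ler_wpM2r.
  by rewrite mulr_ge0 // exprn_ge0 // ltW.
by apply: lerXn2r; rewrite // qualifE /= ltW.
Qed.

Lemma upper_b (R : realFieldType) (a : R) T : 0 < a -> a <= 1 -> (0 < T)%N ->
  a ^+ T / \sum_(t < T) a ^+ t <= T%:R^-1.
Proof.
move=> ap a1 T0.
have Sp := geo_pos (ltW ap) T0.
rewrite ler_pdivrMr // mulrC ler_pdivlMr ?ltr0n //.
rewrite mulr_natr -[in X in _ *+ X](card_ord T) -sumr_const; apply: ler_sum => t _.
apply: (ler_wiXn2l (ltW ap) a1); exact: ltnW (ltn_ord t).
Qed.

Lemma map_mxXn (R : rcfType) n (A : 'M[R]_n) k :
  map_mx (phiC R) (A ^+ k) = (map_mx (phiC R) A) ^+ k.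
Proof.
elim: k => [|k IH]; first by rewrite !expr0 map_mx1.
by rewrite !exprS -!mulmxE map_mxM IH.
Qed.

Local Close Scope sesquilinear_scope.

Theorem lemma3p14 (R : rcfType) (n : nat) (B : 'M[R]_n)
  (rho : R) (T : nat) (alpha : R) :
  psd_mx B ->
  eigenvalue B rho ->
  (forall a : R, eigenvalue B a -> a <= rho) ->
  (1 <= T)%N ->
  0 < alpha ->
  alpha * rho < 1 ->
  let C := \sum_(t < T) (1%:M - alpha *: B) ^+ t in
  let M := invmx C *m (1%:M - alpha *: B) ^+ T in
  let N := alpha^-1 *: (invmx C - M) in
  [/\ C \in unitmx, symmetric_mx C, psd_mx N, pd_mx M &
      loewner_le (((1 - alpha * rho) ^+ T / \sum_(t < T) (1 - alpha * rho) ^+ t)%:M) M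
      /\ loewner_le M ((T%:R)^-1%:M)].
Proof.
move=> Bpsd _ Hmax T1 al0 arho C M N.
have [U [d [Uu EB Ed]]] := spec_setup (proj1 Bpsd).
have d0 : forall i, 0 <= d i := fun i => eig_psd_ge0 Bpsd (Ed i).
have dr : forall i, d i <= rho := fun i => Hmax _ (Ed i).
have a0p : 0 < 1 - alpha * rho by rewrite subr_gt0.
have aLe : forall i, 1 - alpha * rho <= 1 - alpha * d i.
  by move=> i; rewrite lerD2l lerN2 ler_wpM2l // ltW.
have ap : forall i, 0 < 1 - alpha * d i := fun i => lt_le_trans a0p (aLe i).
have a1 : forall i, 1 - alpha * d i <= 1.
  by move=> i; rewrite lerBlDr lerDl mulr_ge0 // ltW.
pose S (x : R) := \sum_(t < T) x ^+ t.
have Spos : forall i, 0 < S (1 - alpha * d i) := fun i => geo_pos (ltW (ap i)) T1.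
have EA : map_mx (phiC R) (1%:M - alpha *: B) =
          Sp U (fun i => phiC R (1 - alpha * d i)).
  rewrite map_mxB map_mx1 map_mxZ EB SpZ -(SpC (U:=U) 1 Uu) SpB; apply: eqSp => i.
  by rewrite rmorphB rmorph1 rmorphM.
have EAt : forall t, map_mx (phiC R) ((1%:M - alpha *: B) ^+ t) =
          Sp U (fun i => phiC R ((1 - alpha * d i) ^+ t)).
  elim=> [|t IH].
    rewrite expr0 map_mx1 -(SpC (U:=U) 1 Uu); apply: eqSp => i; by rewrite expr0 rmorph1.
  rewrite exprS -mulmxE map_mxM IH EA (SpM _ _ Uu); apply: eqSp => i; by rewrite exprS rmorphM.
have EC : map_mx (phiC R) C = Sp U (fun i => phiC R (S (1 - alpha * d i))).
  rewrite /C map_mx_sum; under eq_bigr do rewrite EAt.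
  rewrite (@Sp_sum _ _ U T (fun t i => phiC R ((1 - alpha * d i) ^+ t))).
  by apply: eqSp => i; rewrite rmorph_sum.
have [HCu HCi] := @Sp_inv _ _ U (fun i => phiC R (S (1 - alpha * d i)))
     (fun i => phiC R ((S (1 - alpha * d i))^-1)) Uu
     (fun i => etrans (esym (rmorphM _ _ _)) (etrans (congr1 _ (mulfV (lt0r_neq0 (Spos i)))) (rmorph1 _))).
have Cu : C \in unitmx by rewrite -(map_unitmx (phiC R)) EC.
have ECi : map_mx (phiC R) (invmx C) =
    Sp U (fun i => phiC R ((S (1 - alpha * d i))^-1)) by rewrite map_invmx EC.
have EM : map_mx (phiC R) M =
    Sp U (fun i => phiC R ((1 - alpha * d i) ^+ T / S (1 - alpha * d i))).
  rewrite /M map_mxM ECi EAt (SpM _ _ Uu); apply: eqSp => i; by rewrite -rmorphM mulrC.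
have EN : map_mx (phiC R) N =
    Sp U (fun i => phiC R (alpha^-1 * ((S (1 - alpha * d i))^-1 -
                  (1 - alpha * d i) ^+ T / S (1 - alpha * d i)))).
  rewrite /N map_mxZ map_mxB ECi EM SpB SpZ; apply: eqSp => i.
  by rewrite [in RHS]rmorphM [in RHS]rmorphB.
pose hM := fun i => (1 - alpha * d i) ^+ T / S (1 - alpha * d i).
pose hN := fun i => alpha^-1 * ((S (1 - alpha * d i))^-1 - hM i).
pose k0 := (1 - alpha * rho) ^+ T / \sum_(t < T) (1 - alpha * rho) ^+ t.
have EM' : map_mx (phiC R) M = Sp U (fun i => phiC R (hM i)) by [].
have EN' : map_mx (phiC R) N = Sp U (fun i => phiC R (hN i)) by [].
split => //.
- exact: sym_of_Sp EC.
- apply: (psd_of_Sp EN') => i; rewrite /hN.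
  apply: mulr_ge0; first by rewrite invr_ge0 ltW.
  rewrite subr_ge0 /hM ler_pdivrMr; last exact: Spos.
  rewrite mulVf; last exact: lt0r_neq0 (Spos i).
  exact: exprn_ile1 (ltW (ap i)) (a1 i).
- apply: (pd_of_Sp Uu EM') => i; rewrite /hM.
  apply: divr_gt0; [exact: exprn_gt0 (ap i) | exact: Spos i].
split.
- have E1 : map_mx (phiC R) (M - k0%:M) = Sp U (fun i => phiC R (hM i - k0)).
    rewrite map_mxB EM' map_scalar_mx -(SpC (U:=U) _ Uu) SpB; apply: eqSp => i.
    by rewrite rmorphB.
  apply: (psd_of_Sp E1) => i; rewrite subr_ge0 /hM /k0.
  exact: lower_b a0p (aLe i) T1.
- have E1 : map_mx (phiC R) ((T%:R)^-1%:M - M) = Sp U (fun i => phiC R ((T%:R)^-1 - hM i)).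
    rewrite map_mxB EM' map_scalar_mx -(SpC (U:=U) _ Uu) SpB; apply: eqSp => i.
    by rewrite rmorphB.
  apply: (psd_of_Sp E1) => i; rewrite subr_ge0 /hM.
  exact: upper_b (ap i) (a1 i) T1.
Qed.
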